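(* Every nonempty sibling $\sigma_d$-invariant lamination $\mathcal L$ contains a chief, i.e. a sublamination which is a nonempty sibling $\sigma_d$-invariant lamination minimal by inclusion among such.
   Context: $\mathbb S$ is the unit circle, $\sigma_d(z)=z^d$, $d\ge2$. A chord $\overline{ab}$ joins $a,b\in\mathbb S$; distinct chords cross if they meet in the open unit disk; a chord is critical if $a\ne b$ and $\sigma_d(a)=\sigma_d(b)$. A lamination is a family of pairwise non-crossing chords (leaves) containing all points of $\mathbb S$, whose union is closed; it is sibling $\sigma_d$-invariant if (1) images of leaves are leaves; (2) every leaf is the image of a leaf; (3) every non-critical leaf $\ell$ belongs to $d$ pairwise disjoint leaves $\ell_1=\ell,\dots,\ell_d$ with equal images. Nonempty means having a nondegenerate leaf. *)

(* Defs.v *)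
From Stdlib Require Import Reals.
From Coquelicot Require Import Coquelicot.
Open Scope R_scope.

Definition point := (R * R)%type.

(* A chord is represented by an ordered pair of endpoints; a lamination is
   required to be symmetric, so it is really a family of unordered chords. *)
Definition chord := (point * point)%type.

Definition on_circle (p : point) : Prop := fst p ^ 2 + snd p ^ 2 = 1.
Definition in_open_disk (p : point) : Prop := fst p ^ 2 + snd p ^ 2 < 1.

Definition cmul (z w : point) : point :=
  (fst z * fst w - snd z * snd w, fst z * snd w + snd z * fst w).
Fixpoint cpow (z : point) (n : nat) : point :=
  match n with O => (1, 0) | S k => cmul z (cpow z k) end.

Definition sigma (d : nat) (z : point) : point := cpow z d.

Definition sigma_chord (d : nat) (c : chord) : chord :=
  (sigma d (fst c), sigma d (snd c)).

Definition chord_eq (c1 c2 : chord) : Prop :=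
  (fst c1 = fst c2 /\ snd c1 = snd c2) \/ (fst c1 = snd c2 /\ snd c1 = fst c2).

Definition seg (c : chord) (p : point) : Prop :=
  exists t : R, 0 <= t <= 1 /\
    p = (fst (fst c) + t * (fst (snd c) - fst (fst c)),
         snd (fst c) + t * (snd (snd c) - snd (fst c))).

Definition cross (c1 c2 : chord) : Prop :=
  ~ chord_eq c1 c2 /\ exists p, in_open_disk p /\ seg c1 p /\ seg c2 p.

Definition disjoint_chords (c1 c2 : chord) : Prop :=
  ~ exists p, seg c1 p /\ seg c2 p.

Definition critical (d : nat) (c : chord) : Prop :=
  fst c <> snd c /\ sigma d (fst c) = sigma d (snd c).

Definition degenerate (c : chord) : Prop := fst c = snd c.

Definition lamination (L : chord -> Prop) : Prop :=
  (forall c, L c -> on_circle (fst c) /\ on_circle (snd c)) /\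
  (forall a b, L (a, b) -> L (b, a)) /\
  (forall a, on_circle a -> L (a, a)) /\
  (forall c1 c2, L c1 -> L c2 -> ~ cross c1 c2) /\
  closed (fun p : point => exists c, L c /\ seg c p).

Definition sibling_invariant (d : nat) (L : chord -> Prop) : Prop :=
  (forall c, L c -> L (sigma_chord d c)) /\
  (forall c, L c -> exists c', L c' /\ chord_eq (sigma_chord d c') c) /\
  (forall c, L c -> ~ critical d c ->
     exists f : nat -> chord,
       f O = c /\
       (forall i, (i < d)%nat -> L (f i)) /\
       (forall i, (i < d)%nat -> chord_eq (sigma_chord d (f i)) (sigma_chord d c)) /\
       (forall i j, (i < d)%nat -> (j < d)%nat -> i <> j ->
          disjoint_chords (f i) (f j))).

Definition nonempty_lam (L : chord -> Prop) : Prop :=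
  exists c, L c /\ ~ degenerate c.

Definition nonempty_sibling_invariant_lamination (d : nat) (L : chord -> Prop) : Prop :=
  lamination L /\ sibling_invariant d L /\ nonempty_lam L.

Definition sublam (L' L : chord -> Prop) : Prop := forall c, L' c -> L c.

Definition chief (d : nat) (L L' : chord -> Prop) : Prop :=
  sublam L' L /\
  nonempty_sibling_invariant_lamination d L' /\
  (forall L'', sublam L'' L' -> nonempty_sibling_invariant_lamination d L'' ->
     forall c, L' c -> L'' c).

(* Main.v *)
From Pilot Require Import Defs.
From Stdlib Require Import Reals.
From Coquelicot Require Import Coquelicot.
From Stdlib Require Import Lra Lia Psatz Classical ClassicalEpsilon ZArith.
From Stdlib Require Import Arith.Cantor.
Import Pilot.Defs.
Open Scope R_scope.



Ltac ceq := apply injective_projections; simpl; ring.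

Lemma circle_Cmod (p : point) : on_circle p -> Cmod p = 1.
Proof. unfold on_circle, Cmod. intros H. rewrite H. apply sqrt_1. Qed.

Lemma Cmod_circle (p : point) : Cmod p = 1 -> on_circle p.
Proof. unfold on_circle, Cmod. intros H.
  assert (0 <= fst p ^ 2 + snd p ^ 2) by nra.
  rewrite <- (sqrt_sqrt _ H0), H. ring. Qed.

Lemma cpow_Cmod (z : point) (k : nat) : Cmod (cpow z k) = Cmod z ^ k.
Proof. induction k; simpl. - unfold Cmod; simpl. replace (1 * (1 * 1) + 0 * (0 * 1)) with 1 by ring. apply sqrt_1.
  - change (cmul z (cpow z k)) with (Cmult z (cpow z k)). rewrite Cmod_mult, IHk. ring. Qed.

Lemma cpow_circle (z : point) (k : nat) : on_circle z -> on_circle (cpow z k).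
Proof. intros H. apply Cmod_circle. rewrite cpow_Cmod, circle_Cmod by auto. apply pow1. Qed.

Lemma sigma_circle (d : nat) (z : point) : on_circle z -> on_circle (sigma d z).
Proof. apply cpow_circle. Qed.

Lemma pow_diff_le (z w : point) (k : nat) : Cmod z = 1 -> Cmod w = 1 ->
  Cmod (Cminus (cpow z k) (cpow w k)) <= INR k * Cmod (Cminus z w).
Proof. intros Hz Hw. induction k.
  - simpl. replace (Cminus (1,0) (1,0)) with (RtoC 0) by ceq. rewrite Cmod_0. lra.
  - simpl cpow. change (cmul z (cpow z k)) with (Cmult z (cpow z k)).
    change (cmul w (cpow w k)) with (Cmult w (cpow w k)).
    replace (Cminus (Cmult z (cpow z k)) (Cmult w (cpow w k))) with
      (Cplus (Cmult z (Cminus (cpow z k) (cpow w k))) (Cmult (Cminus z w) (cpow w k))) by ceq.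
    eapply Rle_trans. apply Cmod_triangle. rewrite !Cmod_mult, Hz, cpow_Cmod, Hw, pow1.
    rewrite S_INR. lra. Qed.

Fixpoint Ssum (a b : point) (k : nat) : point :=
  match k with O => (0,0) | S k => Cplus (Cmult a (Ssum a b k)) (cpow b k) end.

Lemma Ssum_id (a b : point) (k : nat) : Cminus (cpow a k) (cpow b k) = Cmult (Cminus a b) (Ssum a b k).
Proof. induction k; simpl. - ceq.
  - change (cmul a (cpow a k)) with (Cmult a (cpow a k)).
    change (cmul b (cpow b k)) with (Cmult b (cpow b k)).
    transitivity (Cplus (Cmult a (Cminus (cpow a k) (cpow b k))) (Cmult (Cminus a b) (cpow b k))).
    ceq. rewrite IHk. ceq. Qed.

Lemma Ssum_approx (a b : point) (k : nat) : Cmod a = 1 -> Cmod b = 1 ->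
  Cmod (Cminus (Cmult (Ssum a b k) a) (Cmult (RtoC (INR k)) (cpow a k))) <= INR k ^ 2 * Cmod (Cminus a b).
Proof. intros Ha Hb. induction k.
  - simpl. replace (Cminus (Cmult (0,0) a) (Cmult (RtoC 0) (1,0))) with (RtoC 0) by ceq. rewrite Cmod_0. lra.
  - simpl Ssum. simpl cpow. change (cmul a (cpow a k)) with (Cmult a (cpow a k)).
    replace (Cminus (Cmult (Cplus (Cmult a (Ssum a b k)) (cpow b k)) a)
                (Cmult (RtoC (INR (S k))) (Cmult a (cpow a k)))) with
      (Cplus (Cmult a (Cminus (Cmult (Ssum a b k) a) (Cmult (RtoC (INR k)) (cpow a k))))
             (Cmult a (Cminus (cpow b k) (cpow a k)))) by (rewrite S_INR; ceq).
    eapply Rle_trans. apply Cmod_triangle. rewrite !Cmod_mult, Ha.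
    pose proof (pow_diff_le b a k Hb Ha).
    replace (Cminus b a) with (Copp (Cminus a b)) in H by ceq. rewrite Cmod_opp in H.
    rewrite S_INR. pose proof (pos_INR k). pose proof (Cmod_ge_0 (Cminus a b)). nra. Qed.

Lemma Cmod_rev (x y : point) : Cmod x <= Cmod (Cminus x y) + Cmod y.
Proof. replace x with (Cplus (Cminus x y) y) at 1 by ceq. apply Cmod_triangle. Qed.

Lemma expand_lemma (d : nat) (a b : point) : (2 <= d)%nat -> Cmod a = 1 -> Cmod b = 1 ->
  Cmod (Cminus a b) <= / (2 * INR d ^ 2) ->
  3/2 * Cmod (Cminus a b) <= Cmod (Cminus (cpow a d) (cpow b d)).
Proof. intros Hd Ha Hb He. rewrite Ssum_id, Cmod_mult.
  pose proof (Ssum_approx a b d Ha Hb).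
  assert (HD : 2 <= INR d) by (apply (le_INR 2); auto).
  assert (Cmod (Cmult (RtoC (INR d)) (cpow a d)) = INR d).
  { rewrite Cmod_mult, cpow_Cmod, Ha, pow1, Cmod_R, Rabs_pos_eq; lra. }
  assert (Cmod (Ssum a b d) >= 3/2).
  { pose proof (Cmod_rev (Cmult (RtoC (INR d)) (cpow a d)) (Cmult (Ssum a b d) a)).
    replace (Cminus (Cmult (RtoC (INR d)) (cpow a d)) (Cmult (Ssum a b d) a)) with
      (Copp (Cminus (Cmult (Ssum a b d) a) (Cmult (RtoC (INR d)) (cpow a d)))) in H1 by ceq.
    rewrite Cmod_opp, (Cmod_mult (Ssum a b d) a), Ha, H0 in H1. rewrite Rmult_1_r in H1.
    assert (INR d ^ 2 * Cmod (Cminus a b) <= / 2).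
    { apply Rmult_le_compat_l with (r := INR d ^2) in He; [|nra].
      rewrite Rinv_mult in He. replace (INR d ^ 2 * (/ 2 * / INR d ^ 2)) with (/2) in He. lra.
      field. nra. }
    lra. }
  pose proof (Cmod_ge_0 (Cminus a b)). nra.
Qed.


Lemma sq0 (x : R) : x ^ 2 = 0 -> x = 0.
Proof. intros H. destruct (Req_dec x 0); auto. exfalso. apply (pow_nonzero x 2 H0 H). Qed.

Lemma sqpos (x : R) : x <> 0 -> 0 < x ^ 2.
Proof. intros H. replace (x ^ 2) with (x * x) by ring. destruct (Rlt_or_le x 0); [nra|].
  assert (0 < x) by lra. nra. Qed.

Definition side (p q r : point) : R :=
  (fst q - fst p) * (snd r - snd p) - (snd q - snd p) * (fst r - fst p).

Lemma seg_norm (u v p : point) : on_circle u -> on_circle v -> seg (u, v) p ->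
  fst p ^ 2 + snd p ^ 2 <= 1.
Proof. unfold on_circle, seg; cbn [fst snd]. intros Hu Hv [t [Ht ->]]. cbn [fst snd].
  assert (E : (fst u + t * (fst v - fst u)) ^ 2 + (snd u + t * (snd v - snd u)) ^ 2 =
     1 - t * (1 - t) * ((fst u - fst v)^2 + (snd u - snd v)^2)) by nra.
  rewrite E.
  assert (0 <= t * (1 - t)) by nra. pose proof (pow2_ge_0 (fst u - fst v)); pose proof (pow2_ge_0 (snd u - snd v)). assert (0 <= t * (1 - t) * ((fst u - fst v)^2 + (snd u - snd v)^2)) by (apply Rmult_le_pos; lra). lra. Qed.

Lemma seg_circle (u v p : point) : on_circle u -> on_circle v -> seg (u, v) p ->
  on_circle p -> p = u \/ p = v.
Proof. unfold on_circle, seg; cbn [fst snd]. intros Hu Hv [t [Ht ->]] Hp. cbn [fst snd] in Hp.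
  assert (E0 : (fst u + t * (fst v - fst u)) ^ 2 + (snd u + t * (snd v - snd u)) ^ 2 =
     1 - t * (1 - t) * ((fst v - fst u)^2 + (snd v - snd u)^2)) by nra.
  assert (E : t * (1 - t) * ((fst v - fst u)^2 + (snd v - snd u)^2) = 0) by lra.
  destruct (Rmult_integral _ _ E) as [E1|E1].
  - destruct (Rmult_integral _ _ E1) as [E2|E2].
    + left. subst t. destruct u; simpl; f_equal; ring.
    + right. assert (t = 1) by lra. subst t. destruct v; simpl; f_equal; ring.
  - left. pose proof (pow2_ge_0 (fst v - fst u)); pose proof (pow2_ge_0 (snd v - snd u)).
    assert (A1 : (fst v - fst u)^2 = 0) by lra. assert (A2 : (snd v - snd u)^2 = 0) by lra.
    apply sq0 in A1. apply sq0 in A2.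
    destruct u; cbn [fst snd] in *. rewrite A1, A2. f_equal; ring. Qed.

Lemma line_circle (p q r : point) : on_circle p -> on_circle q -> on_circle r -> p <> q ->
  side p q r = 0 -> r = p \/ r = q.
Proof. unfold on_circle, side. destruct p as [px py], q as [qx qy], r as [rx ry]; cbn [fst snd].
  intros Hp Hq Hr Hpq Hs.
  set (D := (qx - px)^2 + (qy - py)^2).
  assert (HD : D > 0).
  { unfold D. destruct (Req_dec qx px); [destruct (Req_dec qy py)|].
    - subst. exfalso; apply Hpq; auto.
    - pose proof (pow2_ge_0 (qx - px)). assert (Hn : qy - py <> 0) by lra. pose proof (sqpos _ Hn). lra.
    - pose proof (pow2_ge_0 (qy - py)). assert (Hn : qx - px <> 0) by lra. pose proof (sqpos _ Hn). lra. }
  set (s := ((rx - px)*(qx-px) + (ry-py)*(qy-py)) / D).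
  assert (E1 : rx - px = s * (qx - px)).
  { assert (K : (rx-px)*D - ((rx - px)*(qx-px) + (ry-py)*(qy-py))*(qx-px) =
       -(qy-py)*((qx - px) * (ry - py) - (qy - py) * (rx - px))) by (unfold D; ring).
    rewrite Hs, Rmult_0_r in K.
    unfold s. apply Rmult_eq_reg_r with D; [|lra].
    replace (((rx - px)*(qx-px) + (ry-py)*(qy-py)) / D * (qx - px) * D) with
       (((rx - px)*(qx-px) + (ry-py)*(qy-py)) * (qx - px)) by (field; lra). lra. }
  assert (E2 : ry - py = s * (qy - py)).
  { assert (K : (ry-py)*D - ((rx - px)*(qx-px) + (ry-py)*(qy-py))*(qy-py) =
       (qx-px)*((qx - px) * (ry - py) - (qy - py) * (rx - px))) by (unfold D; ring).
    rewrite Hs, Rmult_0_r in K.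
    unfold s. apply Rmult_eq_reg_r with D; [|lra].
    replace (((rx - px)*(qx-px) + (ry-py)*(qy-py)) / D * (qy - py) * D) with
       (((rx - px)*(qx-px) + (ry-py)*(qy-py)) * (qy - py)) by (field; lra). lra. }
  assert (Es : s * (s - 1) * D = 0).
  { unfold D. replace rx with (px + s * (qx - px)) in Hr by lra.
    replace ry with (py + s * (qy - py)) in Hr by lra. nra. }
  destruct (Rmult_integral _ _ Es) as [Es'|Es']; [|lra].
  destruct (Rmult_integral _ _ Es') as [Es''|Es''].
  - left. subst s. rewrite Es'' in E1, E2. f_equal; lra.
  - right. assert (s = 1) by lra. rewrite H in E1, E2. f_equal; lra.
Qed.

Definition mid (a b : point) : point := ((fst a + fst b) / 2, (snd a + snd b) / 2).

Lemma mid_disk (a b : point) : on_circle a -> on_circle b -> a <> b -> in_open_disk (mid a b).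
Proof. unfold on_circle, in_open_disk, mid. destruct a as [ax ay], b as [bx by0]; cbn [fst snd].
  intros Ha Hb Hab.
  assert (E : ((ax + bx)/2)^2 + ((ay + by0)/2)^2 = 1 - ((ax - bx)^2 + (ay - by0)^2)/4) by nra.
  rewrite E. destruct (Req_dec ax bx); [destruct (Req_dec ay by0)|].
  - subst. exfalso; apply Hab; auto.
  - pose proof (pow2_ge_0 (ax - bx)). assert (Hn : ay - by0 <> 0) by lra. pose proof (sqpos _ Hn). lra.
  - pose proof (pow2_ge_0 (ay - by0)). assert (Hn : ax - bx <> 0) by lra. pose proof (sqpos _ Hn). lra.
Qed.

Lemma mid_seg (a b : point) : seg (a, b) (mid a b).
Proof. exists (1/2). split; [lra|]. unfold mid; cbn [fst snd]. f_equal; field. Qed.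

Lemma side_affine (a b u v : point) (t : R) :
  side a b (fst u + t * (fst v - fst u), snd u + t * (snd v - snd u)) =
  (1 - t) * side a b u + t * side a b v.
Proof. unfold side; cbn [fst snd]. ring. Qed.

Lemma circle_not_disk (p : point) : on_circle p -> ~ in_open_disk p.
Proof. unfold on_circle, in_open_disk. lra. Qed.

Lemma mid_cross (a b u v : point) : on_circle a -> on_circle b -> on_circle u -> on_circle v ->
  a <> b -> seg (u, v) (mid a b) -> ~ chord_eq (u, v) (a, b) ->
  side a b u * side a b v < 0 /\ side u v a * side u v b < 0.
Proof. intros Ha Hb Hu Hv Hab Hseg Hne.
  pose proof (mid_disk a b Ha Hb Hab) as HM.
  destruct Hseg as [t [Ht HMt]]. cbn [fst snd] in HMt.
  assert (E0 : side a b (mid a b) = 0) by (unfold side, mid; cbn [fst snd]; field).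
  rewrite HMt, side_affine in E0.
  assert (Mu : t = 0 -> False).
  { intros ->. apply (circle_not_disk u Hu). pose proof HM as HM'. rewrite HMt in HM'. destruct u; cbn [fst snd] in *.
    replace (r + 0 * (fst v - r)) with r in HM' by ring. replace (r0 + 0 * (snd v - r0)) with r0 in HM' by ring. exact HM'. }
  assert (Mv : t = 1 -> False).
  { intros ->. apply (circle_not_disk v Hv). pose proof HM as HM'. rewrite HMt in HM'. destruct v; cbn [fst snd] in *.
    replace (fst u + 1 * (r - fst u)) with r in HM' by ring. replace (snd u + 1 * (r0 - snd u)) with r0 in HM' by ring. exact HM'. }
  assert (Muv : u = v -> False).
  { intros ->. apply (circle_not_disk v Hv). pose proof HM as HM'. rewrite HMt in HM'. destruct v; cbn [fst snd] in *.
    replace (r + t * (r - r)) with r in HM' by ring. replace (r0 + t * (r0 - r0)) with r0 in HM' by ring. exact HM'. }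
  assert (Su : side a b u <> 0).
  { intros Hsu. destruct (line_circle a b u Ha Hb Hu Hab Hsu) as [Eu|Eu];
    rewrite Hsu in E0; assert (Hsv : side a b v = 0) by (destruct (Req_dec t 0); [exfalso; auto|nra]);
    destruct (line_circle a b v Ha Hb Hv Hab Hsv) as [Ev|Ev]; subst; try (apply Muv; reflexivity);
    apply Hne; unfold chord_eq; cbn [fst snd]; auto. }
  assert (Sv : side a b v <> 0).
  { intros Hsv. rewrite Hsv in E0. assert (1 - t = 0) by (destruct (Req_dec (1 - t) 0); [auto| exfalso; apply Su; nra]).
    apply Mv. lra. }
  assert (T1 : 0 < t) by (destruct Ht; destruct (Req_dec t 0); [exfalso; auto|lra]).
  assert (T2 : t < 1) by (destruct Ht; destruct (Req_dec t 1); [exfalso; auto|lra]).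
  assert (P1 : side a b u * side a b v < 0).
  { assert (E1 : (1 - t) * (side a b u * side a b v) = - t * (side a b v * side a b v)) by nra.
    assert (0 < side a b v * side a b v) by (pose proof (sqpos _ Sv); simpl in H; lra).
    nra. }
  split; [exact P1|].
  assert (E2 : side u v (mid a b) = 0).
  { rewrite HMt. unfold side; cbn [fst snd]. ring. }
  assert (E3 : side u v (mid a b) = (side u v a + side u v b) / 2) by (unfold side, mid; cbn [fst snd]; field).
  assert (Sa : side u v a <> 0).
  { intros Hsa. destruct (line_circle u v a Hu Hv Ha Muv Hsa) as [Ea|Ea]; subst a.
    - assert (side u b u = 0) by (unfold side; ring). rewrite H in P1. lra.
    - assert (side v b v = 0) by (unfold side; ring). rewrite H in P1. lra. }
  assert (side u v b = - side u v a) by lra. rewrite H.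
  pose proof (sqpos _ Sa). simpl in H0. lra.
Qed.

Lemma ratio01 (x y : R) : x * y < 0 -> 0 < x / (x - y) < 1.
Proof. intros H. destruct (Rlt_or_le x 0).
  - assert (0 < y) by nra. split.
    + apply Rdiv_neg_neg; lra.
    + apply Rmult_lt_reg_r with (y - x); [lra|]. unfold Rdiv.
      replace (x * / (x - y) * (y - x)) with (- x) by (field; lra). lra.
  - assert (0 < x) by (destruct H0; [auto| subst; lra]). assert (y < 0) by nra. split.
    + apply Rdiv_lt_0_compat; lra.
    + apply Rmult_lt_reg_r with (x - y); [lra|]. unfold Rdiv.
      replace (x * / (x - y) * (x - y)) with x by (field; lra). lra.
Qed.

Lemma crossing (p q r s : point) : on_circle p -> on_circle q -> on_circle r -> on_circle s ->
  side p q r * side p q s < 0 -> side r s p * side r s q < 0 -> cross (p, q) (r, s).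
Proof. intros Hp Hq Hr Hs H1 H2. split.
  - unfold chord_eq; cbn [fst snd]. intros [[E1 E2]|[E1 E2]]; subst.
    + assert (side r s r = 0) by (unfold side; ring). rewrite H in H2. lra.
    + assert (side r s s = 0) by (unfold side; ring). rewrite H in H2. lra.
  - set (t := side r s p / (side r s p - side r s q)).
    set (t' := side p q r / (side p q r - side p q s)).
    pose proof (ratio01 _ _ H2) as Ht. pose proof (ratio01 _ _ H1) as Ht'.
    fold t in Ht. fold t' in Ht'.
    assert (D1 : side r s p - side r s q <> 0) by nra.
    assert (D2 : side p q r - side p q s <> 0) by nra.
    exists (fst p + t * (fst q - fst p), snd p + t * (snd q - snd p)). split; [|split].
    + unfold in_open_disk, on_circle in *. cbn [fst snd].
      assert (Hpq : p <> q). { intros ->. assert (side q q r = 0) by (unfold side; ring). rewrite H in H1. lra. }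
      destruct p as [px py], q as [qx qy]; cbn [fst snd] in *.
      assert (E : (px + t * (qx - px)) ^ 2 + (py + t * (qy - py)) ^ 2 =
        1 - t * (1 - t) * ((qx - px)^2 + (qy - py)^2)) by nra.
      rewrite E.
      assert (0 < (qx - px)^2 + (qy - py)^2).
      { destruct (Req_dec qx px); [destruct (Req_dec qy py)|].
        - subst. exfalso; apply Hpq; auto.
        - pose proof (pow2_ge_0 (qx - px)). assert (Hn : qy - py <> 0) by lra. pose proof (sqpos _ Hn). lra.
        - pose proof (pow2_ge_0 (qy - py)). assert (Hn : qx - px <> 0) by lra. pose proof (sqpos _ Hn). lra. }
      assert (0 < t * (1 - t)) by nra.
      assert (0 < t * (1 - t) * ((qx - px)^2 + (qy - py)^2)) by (apply Rmult_lt_0_compat; lra). lra.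
    + exists t. split; [lra|]. reflexivity.
    + exists t'. split; [lra|]. cbn [fst snd]. unfold t, t'.
      unfold side in *. destruct p as [px py], q as [qx qy], r as [rx ry], s as [sx sy]; cbn [fst snd] in *.
      f_equal; field; split; auto.
Qed.

Lemma abs_between (z c : R) : Rabs z <= c -> -c <= z <= c.
Proof. unfold Rabs. destruct (Rcase_abs z); lra. Qed.

Lemma mul_bound (x y A B : R) : -A <= x <= A -> -B <= y <= B -> -(A*B) <= x*y <= A*B.
Proof. intros Hx Hy. apply abs_between. rewrite Rabs_mult.
  apply Rmult_le_compat; try apply Rabs_pos; apply Rabs_le; lra. Qed.

Definition close (e : R) (p p' : point) : Prop :=
  Rabs (fst p' - fst p) < e /\ Rabs (snd p' - snd p) < e.

Definition bnd (p : point) : Prop := -1 <= fst p <= 1 /\ -1 <= snd p <= 1.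

Lemma circle_bnd (p : point) : on_circle p -> bnd p.
Proof. unfold on_circle, bnd. intros H. pose proof (pow2_ge_0 (fst p)). pose proof (pow2_ge_0 (snd p)).
  split; split; nra. Qed.

Lemma side_cont (p q r p' q' r' : point) (e : R) : bnd p -> bnd q -> bnd r -> e <= 1 ->
  close e p p' -> close e q q' -> close e r r' ->
  Rabs (side p' q' r' - side p q r) <= 24 * e.
Proof. unfold bnd, close, side.
  destruct p as [px py], q as [qx qy], r as [rx ry], p' as [px' py'], q' as [qx' qy'], r' as [rx' ry'];
  cbn [fst snd]. intros Hp Hq Hr He [P1 P2] [Q1 Q2] [R1 R2].
  apply Rabs_def2 in P1, P2, Q1, Q2, R1, R2.
  assert (E : (qx' - px') * (ry' - py') - (qy' - py') * (rx' - px') -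
     ((qx - px) * (ry - py) - (qy - py) * (rx - px)) =
     (qx - px) * ((ry' - ry) - (py' - py)) + ((qx' - qx) - (px' - px)) * (ry - py)
     + ((qx' - qx) - (px' - px)) * ((ry' - ry) - (py' - py))
     - ((qy - py) * ((rx' - rx) - (px' - px)) + ((qy' - qy) - (py' - py)) * (rx - px)
     + ((qy' - qy) - (py' - py)) * ((rx' - rx) - (px' - px)))) by ring.
  rewrite E. apply Rabs_le.
  set (A1 := qx - px). set (A2 := qy - py). set (B1 := rx - px). set (B2 := ry - py).
  set (dA1 := (qx' - qx) - (px' - px)). set (dA2 := (qy' - qy) - (py' - py)).
  set (dB1 := (rx' - rx) - (px' - px)). set (dB2 := (ry' - ry) - (py' - py)).
  assert (bA1 : -(2) <= A1 <= 2) by (unfold A1; lra). assert (bA2 : -(2) <= A2 <= 2) by (unfold A2; lra).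
  assert (bB1 : -(2) <= B1 <= 2) by (unfold B1; lra). assert (bB2 : -(2) <= B2 <= 2) by (unfold B2; lra).
  assert (bdA1 : -(2*e) <= dA1 <= 2*e) by (unfold dA1; lra).
  assert (bdA2 : -(2*e) <= dA2 <= 2*e) by (unfold dA2; lra).
  assert (bdB1 : -(2*e) <= dB1 <= 2*e) by (unfold dB1; lra).
  assert (bdB2 : -(2*e) <= dB2 <= 2*e) by (unfold dB2; lra).
  assert (e0 : 0 <= e) by (destruct P1; lra).
  pose proof (mul_bound _ _ _ _ bA1 bdB2). pose proof (mul_bound _ _ _ _ bdA1 bB2).
  pose proof (mul_bound _ _ _ _ bdA1 bdB2). pose proof (mul_bound _ _ _ _ bA2 bdB1).
  pose proof (mul_bound _ _ _ _ bdA2 bB1). pose proof (mul_bound _ _ _ _ bdA2 bdB1).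
  assert (2 * e * (2 * e) <= 4 * e) by nra.
  lra.
Qed.

Lemma sign_keep (x y x' y' : R) : x * y < 0 -> Rabs (x' - x) <= Rabs x / 2 ->
  Rabs (y' - y) <= Rabs y / 2 -> x' * y' < 0.
Proof. intros H Hx Hy. apply abs_between in Hx, Hy.
  destruct (Rlt_or_le x 0).
  - assert (0 < y) by nra. rewrite (Rabs_left x) in Hx by lra. rewrite (Rabs_right y) in Hy by lra.
    assert (x' < 0) by lra. assert (0 < y') by lra. nra.
  - assert (0 < x) by (destruct H0; auto; subst; lra). assert (y < 0) by nra.
    rewrite (Rabs_right x) in Hx by lra. rewrite (Rabs_left y) in Hy by lra.
    assert (0 < x') by lra. assert (y' < 0) by lra. nra.
Qed.

Lemma ball_pt (x y : point) (e : R) : ball x e y <-> Rabs (fst y - fst x) < e /\ Rabs (snd y - snd x) < e.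
Proof. destruct x, y. simpl. unfold ball; simpl. unfold prod_ball; simpl. unfold ball; simpl.
  unfold AbsRing_ball; simpl. unfold abs, minus, plus, opp; simpl. tauto. Qed.

Lemma close_refl (e : R) (p : point) : 0 < e -> close e p p.
Proof. unfold close. intros. rewrite !Rminus_diag, Rabs_R0. auto. Qed.

Lemma close_mid (e : R) (a b a' b' : point) : close e a a' -> close e b b' -> close e (mid a b) (mid a' b').
Proof. unfold close, mid; cbn [fst snd]. intros [H1 H2] [H3 H4].
  replace ((fst a' + fst b') / 2 - (fst a + fst b) / 2) with ((fst a' - fst a) / 2 + (fst b' - fst b) / 2) by field.
  replace ((snd a' + snd b') / 2 - (snd a + snd b) / 2) with ((snd a' - snd a) / 2 + (snd b' - snd b) / 2) by field.
  assert (K : forall x y, Rabs x < e -> Rabs y < e -> Rabs (x / 2 + y / 2) < e).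
  { intros x y Hx Hy. apply Rabs_def2 in Hx, Hy. apply Rabs_def1; [|]; lra. }
  split; apply K; auto.
Qed.

Lemma lim_leaf (L : chord -> Prop) (a b : point) : lamination L -> on_circle a -> on_circle b -> a <> b ->
  (forall e, 0 < e -> exists a' b', L (a', b') /\ close e a a' /\ close e b b') -> L (a, b).
Proof. intros HL Ha Hb Hab Happ. pose proof HL as [Hc [Hsym [Hdeg [Hnc Hcl]]]].
  assert (HM : exists c, L c /\ seg c (mid a b)).
  { apply Hcl. intros [eps Heps]. destruct (Happ eps (cond_pos eps)) as [a' [b' [HL' [C1 C2]]]].
    apply (Heps (mid a' b')). apply ball_pt. apply (close_mid _ _ _ _ _ C1 C2).
    exists (a', b'). split; auto. apply mid_seg. }
  destruct HM as [[u v] [Luv Suv]].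
  destruct (Hc _ Luv) as [Hu Hv]; cbn [fst snd] in Hu, Hv.
  destruct (classic (chord_eq (u, v) (a, b))) as [Ceq|Cne].
  { destruct Ceq as [[E1 E2]|[E1 E2]]; cbn [fst snd] in *; subst; auto. }
  destruct (mid_cross a b u v Ha Hb Hu Hv Hab Suv Cne) as [S1 S2].
  set (eta := Rmin (Rmin (Rabs (side a b u)) (Rabs (side a b v))) (Rmin (Rabs (side u v a)) (Rabs (side u v b)))).
  assert (Hnz : forall x y : R, x * y < 0 -> 0 < Rabs x /\ 0 < Rabs y).
  { intros x y Hxy. split; apply Rabs_pos_lt; intros ->; lra. }
  destruct (Hnz _ _ S1), (Hnz _ _ S2).
  assert (Heta : 0 < eta) by (unfold eta; repeat apply Rmin_pos; auto).
  assert (E1 : eta <= Rabs (side a b u)) by (unfold eta; eapply Rle_trans; [apply Rmin_l|apply Rmin_l]).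
  assert (E2 : eta <= Rabs (side a b v)) by (unfold eta; eapply Rle_trans; [apply Rmin_l|apply Rmin_r]).
  assert (E3 : eta <= Rabs (side u v a)) by (unfold eta; eapply Rle_trans; [apply Rmin_r|apply Rmin_l]).
  assert (E4 : eta <= Rabs (side u v b)) by (unfold eta; eapply Rle_trans; [apply Rmin_r|apply Rmin_r]).
  set (e := Rmin 1 (eta / 48)).
  assert (He : 0 < e) by (unfold e; apply Rmin_pos; lra).
  assert (He1 : e <= 1) by apply Rmin_l.
  assert (He2 : 24 * e <= eta / 2) by (assert (e <= eta / 48) by apply Rmin_r; lra).
  destruct (Happ e He) as [a' [b' [HL' [C1 C2]]]].
  destruct (Hc _ HL') as [Ha' Hb']; cbn [fst snd] in Ha', Hb'.
  assert (Bd : forall p q r p' q' r', on_circle p -> on_circle q -> on_circle r ->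
     close e p p' -> close e q q' -> close e r r' -> eta <= Rabs (side p q r) ->
     Rabs (side p' q' r' - side p q r) <= Rabs (side p q r) / 2).
  { intros p q r p' q' r' Hp Hq Hr Cp Cq Cr Hs.
    eapply Rle_trans. apply (side_cont p q r p' q' r' e); auto using circle_bnd. lra. }
  assert (Cu := close_refl e u He). assert (Cv := close_refl e v He).
  exfalso. apply (Hnc _ _ HL' Luv). apply crossing; auto.
  - apply (sign_keep (side a b u) (side a b v)); auto; apply Bd; auto.
  - apply (sign_keep (side u v a) (side u v b)); auto; apply Bd; auto.
Qed.


Definition inf (I : nat -> Prop) : Prop := forall N, exists n, (N <= n)%nat /\ I n.
Definition conv (u : nat -> R) (l : R) (J : nat -> Prop) : Prop :=
  forall e, 0 < e -> exists N, forall n, J n -> (N <= n)%nat -> Rabs (u n - l) < e.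

Lemma smono (f : nat -> nat) : (forall k, (f k < f (S k))%nat) -> forall i j, (i < j)%nat -> (f i < f j)%nat.
Proof. intros H i j Hij. induction Hij. apply H. specialize (H m). lia. Qed.

Lemma smono_ge (f : nat -> nat) : (forall k, (f k < f (S k))%nat) -> forall k, (k <= f k)%nat.
Proof. intros H k. induction k. lia. specialize (H k). lia. Qed.

Lemma smono_inv (f : nat -> nat) : (forall k, (f k < f (S k))%nat) -> forall i j, (f i <= f j)%nat -> (i <= j)%nat.
Proof. intros H i j Hij. destruct (Nat.le_gt_cases i j); auto. pose proof (smono f H j i H0). lia. Qed.

Lemma BW1 (I : nat -> Prop) (u : nat -> R) : inf I -> (forall n, I n -> -1 <= u n <= 1) ->
  exists l J, (forall n, J n -> I n) /\ inf J /\ conv u l J.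
Proof. intros HI Hb.
  pose (nx := fun N => proj1_sig (constructive_indefinite_description _ (HI N))).
  assert (Hnx : forall N, (N <= nx N)%nat /\ I (nx N)).
  { intros N. unfold nx. destruct (constructive_indefinite_description _ (HI N)); simpl; auto. }
  pose (g := fix g k := match k with O => nx O | S k => nx (S (g k)) end).
  assert (Hg : forall k, (g k < g (S k))%nat). { intros k. simpl. destruct (Hnx (S (g k))). lia. }
  assert (HgI : forall k, I (g k)). { intros [|k]; simpl; apply Hnx. }
  pose (v := fun k => u (g k)).
  destruct (Bolzano_Weierstrass v (fun c => -1 <= c <= 1) (compact_P3 (-1) 1)) as [l Hl].
  { intros k. apply Hb, HgI. }
  assert (Hcl : forall N k, exists p, (N <= p)%nat /\ Rabs (v p - l) < / INR (S k)).
  { intros N k. assert (Hp : 0 < / INR (S k)) by (apply Rinv_0_lt_compat, lt_0_INR; lia).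
    destruct (Hl (disc l (mkposreal _ Hp)) N) as [p [Hp1 Hp2]].
    - exists (mkposreal _ Hp). intros y Hy. exact Hy.
    - exists p. split; auto. }
  pose (pk := fun N k => proj1_sig (constructive_indefinite_description _ (Hcl N k))).
  assert (Hpk : forall N k, (N <= pk N k)%nat /\ Rabs (v (pk N k) - l) < / INR (S k)).
  { intros N k. unfold pk. destruct (constructive_indefinite_description _ (Hcl N k)); simpl; auto. }
  pose (h := fix h k := match k with O => pk O O | S k => pk (S (h k)) (S k) end).
  assert (Hh : forall k, (h k < h (S k))%nat). { intros k. simpl. destruct (Hpk (S (h k)) (S k)). lia. }
  assert (Hhv : forall k, Rabs (v (h k) - l) < / INR (S k)). { intros [|k]; simpl; apply Hpk. }
  assert (Hgh : forall k, (g (h k) < g (h (S k)))%nat). { intros k. apply smono; auto. }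
  exists l, (fun n => exists k, n = g (h k)). split; [|split].
  - intros n [k ->]. apply HgI.
  - intros N. exists (g (h N)). split; [|eauto]. apply (smono_ge (fun k => g (h k)) Hgh).
  - intros e He. destruct (archimed_cor1 e He) as [K [HK HK0]].
    exists (g (h K)). intros n [k ->] Hn.
    apply (smono_inv (fun k => g (h k)) Hgh) in Hn.
    eapply Rlt_le_trans. apply (Hhv k). 
    apply Rle_trans with (/ INR K); [|lra].
    apply Rinv_le_contravar. apply lt_0_INR; lia. apply le_INR; lia.
Qed.

Lemma conv_sub (u : nat -> R) (l : R) (J J' : nat -> Prop) : (forall n, J' n -> J n) -> conv u l J -> conv u l J'.
Proof. intros Hs Hc e He. destruct (Hc e He) as [N HN]. exists N. intros n Hn. apply HN, Hs, Hn. Qed.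


Definition cconv (f : nat -> chord) (c : chord) (J : nat -> Prop) : Prop :=
  conv (fun n => fst (fst (f n))) (fst (fst c)) J /\ conv (fun n => snd (fst (f n))) (snd (fst c)) J /\
  conv (fun n => fst (snd (f n))) (fst (snd c)) J /\ conv (fun n => snd (snd (f n))) (snd (snd c)) J.

Lemma cconv_sub (f : nat -> chord) c J J' : (forall n, J' n -> J n) -> cconv f c J -> cconv f c J'.
Proof. intros Hs [H1 [H2 [H3 H4]]]. repeat split; eapply conv_sub; eauto. Qed.

Lemma BWchord (I : nat -> Prop) (f : nat -> chord) : inf I ->
  (forall n, I n -> bnd (fst (f n)) /\ bnd (snd (f n))) ->
  exists c J, (forall n, J n -> I n) /\ inf J /\ cconv f c J.
Proof. intros HI Hb.
  destruct (BW1 I (fun n => fst (fst (f n))) HI) as [l1 [J1 [S1 [I1 C1]]]].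
  { intros n Hn. apply Hb, Hn. }
  destruct (BW1 J1 (fun n => snd (fst (f n))) I1) as [l2 [J2 [S2 [I2 C2]]]].
  { intros n Hn. apply Hb, S1, Hn. }
  destruct (BW1 J2 (fun n => fst (snd (f n))) I2) as [l3 [J3 [S3 [I3 C3]]]].
  { intros n Hn. apply Hb, S1, S2, Hn. }
  destruct (BW1 J3 (fun n => snd (snd (f n))) I3) as [l4 [J4 [S4 [I4 C4]]]].
  { intros n Hn. apply Hb, S1, S2, S3, Hn. }
  exists ((l1, l2), (l3, l4)), J4. split; [|split]; auto.
  repeat split; cbn [fst snd].
  - apply (conv_sub _ _ J1); auto.
  - apply (conv_sub _ _ J2); auto.
  - apply (conv_sub _ _ J3); auto.
  - auto.
Qed.

Lemma BWfam (K : nat) (I : nat -> Prop) (F : nat -> nat -> chord) : inf I ->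
  (forall n i, I n -> (i < K)%nat -> bnd (fst (F n i)) /\ bnd (snd (F n i))) ->
  exists G J, (forall n, J n -> I n) /\ inf J /\ forall i, (i < K)%nat -> cconv (fun n => F n i) (G i) J.
Proof. intros HI. induction K; intros Hb.
  - exists (fun _ => ((0,0),(0,0))), I. split; [|split]; auto. intros; lia.
  - destruct IHK as [G [J [SJ [IJ CJ]]]]. { intros; apply Hb; auto. }
    destruct (BWchord J (fun n => F n K) IJ) as [c [J' [SJ' [IJ' CJ']]]].
    { intros n Hn. apply Hb; auto. }
    exists (fun i => if Nat.eq_dec i K then c else G i), J'. split; [|split]; auto.
    intros i Hi. destruct (Nat.eq_dec i K).
    + subst. auto.
    + apply (cconv_sub _ _ J); auto. apply CJ. lia.
Qed.

Definition cclose (e : R) (c c' : chord) : Prop := close e (fst c) (fst c') /\ close e (snd c) (snd c').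

Lemma cconv_close (f : nat -> chord) c J : cconv f c J -> inf J ->
  forall e, 0 < e -> forall N, exists n, (N <= n)%nat /\ J n /\ cclose e c (f n).
Proof. intros [H1 [H2 [H3 H4]]] HJ e He N.
  destruct (H1 e He) as [N1 K1]. destruct (H2 e He) as [N2 K2].
  destruct (H3 e He) as [N3 K3]. destruct (H4 e He) as [N4 K4].
  destruct (HJ (N + N1 + N2 + N3 + N4)%nat) as [n [Hn Jn]].
  exists n. split; [lia|]. split; auto. unfold cclose, close. repeat split.
  apply K1; auto; lia. apply K2; auto; lia. apply K3; auto; lia. apply K4; auto; lia.
Qed.


Lemma small_zero (z : R) : (forall e, 0 < e -> Rabs z < e) -> z = 0.
Proof. intros H. destruct (Req_dec z 0); auto. exfalso.
  specialize (H (Rabs z) (Rabs_pos_lt _ H0)). lra. Qed.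

Lemma circle_lim (p : point) : (forall e, 0 < e -> exists p', on_circle p' /\ close e p p') -> on_circle p.
Proof. intros H. unfold on_circle.
  assert (fst p ^ 2 + snd p ^ 2 - 1 = 0); [|lra].
  apply small_zero. intros e He.
  assert (Hpos : 0 < Rmin 1 (e / 12)) by (apply Rmin_pos; lra).
  destruct (H (Rmin 1 (e / 12)) Hpos) as [p' [Hp' [C1 C2]]].
  assert (Hm1 := Rmin_l 1 (e/12)). assert (Hm2 := Rmin_r 1 (e/12)).
  unfold on_circle in Hp'. pose proof (circle_bnd p' Hp') as [B1 B2].
  apply Rabs_def2 in C1, C2. destruct C1 as [C1 C1'], C2 as [C2 C2'].
  destruct B1 as [B1 B1'], B2 as [B2 B2'].
  set (m := Rmin 1 (e / 12)) in *.
  replace (fst p ^ 2 + snd p ^ 2 - 1) with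
     ((fst p - fst p') * (fst p + fst p') + (snd p - snd p') * (snd p + snd p')) by (rewrite <- Hp'; ring).
  assert (A1 : -m <= fst p - fst p' <= m) by lra.
  assert (A2 : -(3) <= fst p + fst p' <= 3) by lra.
  assert (A3 : -m <= snd p - snd p' <= m) by lra.
  assert (A4 : -(3) <= snd p + snd p' <= 3) by lra.
  pose proof (mul_bound _ _ _ _ A1 A2). pose proof (mul_bound _ _ _ _ A3 A4).
  apply Rabs_def1; lra.
Qed.

Lemma lim_gen (L : chord -> Prop) (c : chord) : lamination L ->
  (forall e, 0 < e -> exists c', L c' /\ cclose e c c') -> L c.
Proof. intros HL H. pose proof HL as [Hc [Hsym [Hdeg _]]]. destruct c as [a b].
  assert (Ha : on_circle a).
  { apply circle_lim. intros e He. destruct (H e He) as [c' [Lc' [C1 C2]]].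
    exists (fst c'). split; [apply (Hc _ Lc')|exact C1]. }
  assert (Hb : on_circle b).
  { apply circle_lim. intros e He. destruct (H e He) as [c' [Lc' [C1 C2]]].
    exists (snd c'). split; [apply (Hc _ Lc')|exact C2]. }
  destruct (classic (a = b)) as [->|Hab]; [auto|].
  apply lim_leaf; auto. intros e He. destruct (H e He) as [[a' b'] [Lc' [C1 C2]]].
  exists a', b'. auto.
Qed.

Lemma chord_eq_lim (X C : chord) : (forall e, 0 < e -> exists Y, chord_eq Y C /\ cclose e X Y) -> chord_eq X C.
Proof. intros H. destruct X as [[x1 x2] [x3 x4]], C as [[c1 c2] [c3 c4]].
  unfold chord_eq; cbn [fst snd].
  set (r1 := Rabs (c1 - x1) + Rabs (c2 - x2) + Rabs (c3 - x3) + Rabs (c4 - x4)).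
  set (r2 := Rabs (c3 - x1) + Rabs (c4 - x2) + Rabs (c1 - x3) + Rabs (c2 - x4)).
  assert (Hz : forall a b, Rabs (b - a) = 0 -> a = b).
  { intros a b Hab. destruct (Req_dec (b - a) 0); [lra|]. apply Rabs_no_R0 in H0. contradiction. }
  pose proof (Rabs_pos (c1 - x1)). pose proof (Rabs_pos (c2 - x2)). pose proof (Rabs_pos (c3 - x3)). pose proof (Rabs_pos (c4 - x4)).
  pose proof (Rabs_pos (c3 - x1)). pose proof (Rabs_pos (c4 - x2)). pose proof (Rabs_pos (c1 - x3)). pose proof (Rabs_pos (c2 - x4)).
  destruct (Req_dec r1 0) as [E1|E1].
  { left. unfold r1 in E1. split; f_equal; apply Hz; lra. }
  destruct (Req_dec r2 0) as [E2|E2].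
  { right. unfold r2 in E2. split; f_equal; apply Hz; lra. }
  exfalso. assert (P1 : 0 < r1) by (unfold r1 in *; lra). assert (P2 : 0 < r2) by (unfold r2 in *; lra).
  assert (Hm : 0 < Rmin r1 r2 / 4). { assert (0 < Rmin r1 r2) by (apply Rmin_pos; auto). lra. }
  destruct (H _ Hm) as [[[y1 y2] [y3 y4]] [Heq [[C1 C2] [C3 C4]]]].
  cbn [fst snd] in *. pose proof (Rmin_l r1 r2). pose proof (Rmin_r r1 r2).
  destruct Heq as [[E3 E4]|[E3 E4]]; cbn [fst snd] in *;
  injection E3; injection E4; intros; subst; unfold r1, r2 in *; lra.
Qed.

Lemma Cmod_le_sum (p : point) : Cmod p <= Rabs (fst p) + Rabs (snd p).
Proof. unfold Cmod. rewrite <- (sqrt_pow2 (Rabs (fst p) + Rabs (snd p))) by (pose proof (Rabs_pos (fst p)); pose proof (Rabs_pos (snd p)); lra).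
  apply sqrt_le_1_alt. rewrite <- (pow2_abs (fst p)), <- (pow2_abs (snd p)).
  pose proof (Rabs_pos (fst p)); pose proof (Rabs_pos (snd p)). nra. Qed.

Lemma coord_le_Cmod (p : point) : Rabs (fst p) <= Cmod p /\ Rabs (snd p) <= Cmod p.
Proof. pose proof (Rmax_Cmod p). split; eapply Rle_trans; [apply Rmax_l| |apply Rmax_r|]; eauto. Qed.

Lemma sigma_close (d : nat) (e : R) (x y : point) : (0 < d)%nat -> on_circle x -> on_circle y -> close e x y ->
  close (INR d * (2 * e)) (sigma d x) (sigma d y).
Proof. intros Hd0 Hx Hy [C1 C2].
  pose proof (pow_diff_le y x d (circle_Cmod y Hy) (circle_Cmod x Hx)) as K.
  pose proof (Cmod_le_sum (Cminus y x)) as K2.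
  assert (E1 : fst (Cminus y x) = fst y - fst x) by (unfold sigma, Cminus, Cplus, Copp; cbn [fst snd]; ring).
  assert (E2 : snd (Cminus y x) = snd y - snd x) by (unfold sigma, Cminus, Cplus, Copp; cbn [fst snd]; ring).
  rewrite E1, E2 in K2.
  destruct (coord_le_Cmod (Cminus (cpow y d) (cpow x d))) as [K3 K4].
  assert (E3 : fst (Cminus (cpow y d) (cpow x d)) = fst (sigma d y) - fst (sigma d x)) by (unfold sigma, Cminus, Cplus, Copp; cbn [fst snd]; ring).
  assert (E4 : snd (Cminus (cpow y d) (cpow x d)) = snd (sigma d y) - snd (sigma d x)) by (unfold sigma, Cminus, Cplus, Copp; cbn [fst snd]; ring).
  rewrite E3 in K3. rewrite E4 in K4.
  assert (Hd : 0 < INR d) by (apply lt_0_INR; auto).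
  assert (INR d * Cmod (Cminus y x) < INR d * (2 * e)) by (apply Rmult_lt_compat_l; lra).
  unfold close. split; lra.
Qed.

Lemma dist_lim (p q : point) (k : R) : 0 < k ->
  (forall e, 0 < e -> exists p' q', close e p p' /\ close e q q' /\ k <= Cmod (Cminus p' q')) -> p <> q.
Proof. intros Hk H ->. destruct (H (k / 8) ltac:(lra)) as [p' [q' [[C1 C2] [[C3 C4] K]]]].
  pose proof (Cmod_le_sum (Cminus p' q')) as K2.
  assert (E1 : fst (Cminus p' q') = (fst p' - fst q) - (fst q' - fst q)) by (unfold Cminus, Cplus, Copp; cbn [fst snd]; ring).
  assert (E2 : snd (Cminus p' q') = (snd p' - snd q) - (snd q' - snd q)) by (unfold Cminus, Cplus, Copp; cbn [fst snd]; ring).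
  rewrite E1, E2 in K2.
  apply Rabs_def2 in C1, C2, C3, C4.
  destruct C1, C2, C3, C4.
  assert (Rabs ((fst p' - fst q) - (fst q' - fst q)) < k/4) by (apply Rabs_def1; lra).
  assert (Rabs ((snd p' - snd q) - (snd q' - snd q)) < k/4) by (apply Rabs_def1; lra).
  lra.
Qed.

Lemma Cminus_eq0 (a b : point) : Cmod (Cminus a b) = 0 -> a = b.
Proof. intros H. apply Cmod_eq_0 in H. destruct a, b. unfold Cminus, Cplus, Copp in H; cbn [fst snd] in H.
  injection H; intros. f_equal; lra. Qed.

Fixpoint itc (d : nat) (c : chord) (k : nat) : chord :=
  match k with O => c | S k => sigma_chord d (itc d c k) end.

Lemma long_leaf (d : nat) (L : chord -> Prop) : (2 <= d)%nat -> nonempty_sibling_invariant_lamination d L ->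
  exists c, L c /\ / (2 * INR d ^ 2) <= Cmod (Cminus (fst c) (snd c)).
Proof. intros Hd [HL [[Hf _] [c0 [Lc0 Hnd]]]]. pose proof HL as [Hc _].
  apply NNPP. intros Hno.
  assert (Hlt : forall c, L c -> Cmod (Cminus (fst c) (snd c)) < / (2 * INR d ^ 2)).
  { intros c Lc. apply Rnot_le_lt. intros Hle. apply Hno. eauto. }
  assert (HLk : forall k, L (itc d c0 k)). { induction k; simpl; auto. }
  set (l0 := Cmod (Cminus (fst c0) (snd c0))).
  assert (Hl0 : 0 < l0).
  { unfold l0. destruct (Cmod_ge_0 (Cminus (fst c0) (snd c0))); auto. exfalso. apply Hnd. apply Cminus_eq0. auto. }
  assert (Hgrow : forall k, (1 + INR k / 2) * l0 <= Cmod (Cminus (fst (itc d c0 k)) (snd (itc d c0 k)))).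
  { induction k.
    - simpl. unfold l0. lra.
    - simpl itc. destruct (Hc _ (HLk k)) as [Ha Hb].
      pose proof (expand_lemma d (fst (itc d c0 k)) (snd (itc d c0 k)) Hd (circle_Cmod _ Ha) (circle_Cmod _ Hb)
                   (Rlt_le _ _ (Hlt _ (HLk k)))).
      cbn [sigma_chord fst snd]. unfold sigma. rewrite S_INR. pose proof (pos_INR k). nra. }
  destruct (INR_archimed (l0 / 2) (/ (2 * INR d ^ 2)) ltac:(lra)) as [k Hk].
  specialize (Hgrow k). specialize (Hlt _ (HLk k)). nra.
Qed.

Definition NSIL (d : nat) (L : chord -> Prop) := nonempty_sibling_invariant_lamination d L.

Lemma cconv_ev (f : nat -> chord) c J : cconv f c J ->
  forall e, 0 < e -> exists N0, forall n, J n -> (N0 <= n)%nat -> cclose e c (f n).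
Proof. intros [H1 [H2 [H3 H4]]] e He.
  destruct (H1 e He) as [N1 K1]. destruct (H2 e He) as [N2 K2].
  destruct (H3 e He) as [N3 K3]. destruct (H4 e He) as [N4 K4].
  exists (N1 + N2 + N3 + N4)%nat. intros n Jn Hn. unfold cclose, close. repeat split.
  apply K1; auto; lia. apply K2; auto; lia. apply K3; auto; lia. apply K4; auto; lia.
Qed.

Lemma cclose_all_eq (X Y : chord) : (forall e, 0 < e -> cclose e X Y) -> X = Y.
Proof. intros H. destruct X as [[x1 x2] [x3 x4]], Y as [[y1 y2] [y3 y4]].
  assert (y1 - x1 = 0) by (apply small_zero; intros e He; apply (H e He)).
  assert (y2 - x2 = 0) by (apply small_zero; intros e He; apply (H e He)).
  assert (y3 - x3 = 0) by (apply small_zero; intros e He; apply (H e He)).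
  assert (y4 - x4 = 0) by (apply small_zero; intros e He; apply (H e He)).
  f_equal; f_equal; lra. Qed.

Lemma sigma_cclose (d : nat) (e : R) (X Y : chord) : (0 < d)%nat ->
  on_circle (fst X) -> on_circle (snd X) -> on_circle (fst Y) -> on_circle (snd Y) ->
  cclose (e / (2 * INR d)) X Y -> cclose e (sigma_chord d X) (sigma_chord d Y).
Proof. intros Hd H1 H2 H3 H4 [C1 C2].
  assert (Hd' : 0 < INR d) by (apply lt_0_INR; auto).
  assert (E : INR d * (2 * (e / (2 * INR d))) = e) by (field; lra).
  split; cbn [sigma_chord fst snd]; rewrite <- E; apply sigma_close; auto.
Qed.

Lemma seg_fst (a b : point) : seg (a, b) a.
Proof. exists 0. split; [lra|]. destruct a; cbn [fst snd]. f_equal; ring. Qed.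
Lemma seg_snd (a b : point) : seg (a, b) b.
Proof. exists 1. split; [lra|]. destruct b; cbn [fst snd]. f_equal; ring. Qed.

Lemma disj_endpoints (c1 c2 : chord) : disjoint_chords c1 c2 ->
  fst c1 <> fst c2 /\ fst c1 <> snd c2 /\ snd c1 <> fst c2 /\ snd c1 <> snd c2.
Proof. destruct c1 as [a b], c2 as [u v]. unfold disjoint_chords; cbn [fst snd]. intros H.
  repeat split; intros E; subst; apply H.
  - exists u. split; [apply seg_fst|apply seg_fst].
  - exists v. split; [apply seg_fst|apply seg_snd].
  - exists u. split; [apply seg_snd|apply seg_fst].
  - exists v. split; [apply seg_snd|apply seg_snd]. Qed.

Lemma disj_from_distinct (L : chord -> Prop) (c1 c2 : chord) : lamination L -> L c1 -> L c2 ->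
  fst c1 <> fst c2 -> fst c1 <> snd c2 -> snd c1 <> fst c2 -> snd c1 <> snd c2 -> disjoint_chords c1 c2.
Proof. intros HL L1 L2 N1 N2 N3 N4. pose proof HL as [Hc [_ [_ [Hnc _]]]].
  destruct c1 as [a b], c2 as [u v]; cbn [fst snd] in *.
  destruct (Hc _ L1) as [Ha Hb], (Hc _ L2) as [Hu Hv]; cbn [fst snd] in *.
  intros [p [S1 S2]].
  destruct (classic (on_circle p)) as [Hp|Hp].
  - destruct (seg_circle a b p Ha Hb S1 Hp), (seg_circle u v p Hu Hv S2 Hp); subst; auto.
  - assert (in_open_disk p).
    { pose proof (seg_norm a b p Ha Hb S1). unfold in_open_disk, on_circle in *. lra. }
    apply (Hnc _ _ L1 L2). split.
    + intros [[E1 E2]|[E1 E2]]; cbn [fst snd] in *; auto.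
    + exists p. auto.
Qed.

Lemma sib_vals (d : nat) (f c : chord) : chord_eq (sigma_chord d f) (sigma_chord d c) ->
  (sigma d (fst f) = sigma d (fst c) \/ sigma d (fst f) = sigma d (snd c)) /\
  (sigma d (snd f) = sigma d (fst c) \/ sigma d (snd f) = sigma d (snd c)).
Proof. unfold chord_eq; cbn [sigma_chord fst snd]. tauto. Qed.

Lemma Cmod_sym (a b : point) : Cmod (Cminus a b) = Cmod (Cminus b a).
Proof. replace (Cminus a b) with (Copp (Cminus b a)) by ceq. apply Cmod_opp. Qed.

Lemma sep (d : nat) (k : R) (a b x y : point) : (2 <= d)%nat -> 0 < k -> k <= / (2 * INR d ^ 2) ->
  (sigma d a <> sigma d b -> k <= Cmod (Cminus (sigma d a) (sigma d b)) / INR d) ->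
  on_circle x -> on_circle y -> x <> y ->
  (sigma d x = sigma d a \/ sigma d x = sigma d b) -> (sigma d y = sigma d a \/ sigma d y = sigma d b) ->
  k <= Cmod (Cminus x y).
Proof. intros Hd Hk Hkd Hab Hx Hy Hxy Sx Sy.
  assert (Hd' : 0 < INR d) by (apply lt_0_INR; lia).
  destruct (classic (sigma d x = sigma d y)) as [E|E].
  - apply Rnot_lt_le. intros Hlt.
    pose proof (expand_lemma d x y Hd (circle_Cmod _ Hx) (circle_Cmod _ Hy) ltac:(lra)).
    unfold sigma in E. rewrite E in H. replace (Cminus (cpow y d) (cpow y d)) with (RtoC 0) in H by ceq.
    rewrite Cmod_0 in H. apply Hxy. apply Cminus_eq0. pose proof (Cmod_ge_0 (Cminus x y)). lra.
  - assert (Hne : sigma d a <> sigma d b).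
    { intros Eab. apply E. destruct Sx, Sy; congruence. }
    specialize (Hab Hne).
    assert (Cmod (Cminus (sigma d x) (sigma d y)) = Cmod (Cminus (sigma d a) (sigma d b))).
    { destruct Sx as [Sx|Sx], Sy as [Sy|Sy]; rewrite Sx, Sy; try reflexivity; try (exfalso; congruence).
      apply Cmod_sym. }
    pose proof (pow_diff_le x y d (circle_Cmod _ Hx) (circle_Cmod _ Hy)).
    unfold sigma in H. rewrite H in H0.
    apply Rmult_le_reg_l with (INR d); auto.
    unfold Rdiv in Hab. apply Rmult_le_compat_l with (r := INR d) in Hab; [|lra].
    replace (INR d * (Cmod (Cminus (sigma d a) (sigma d b)) * / INR d)) with (Cmod (Cminus (sigma d a) (sigma d b))) in Hab by (field; lra).
    unfold sigma in Hab. lra.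
Qed.

Lemma Ls_mono (Ls : nat -> chord -> Prop) : (forall n c, Ls (S n) c -> Ls n c) ->
  forall m n c, (m <= n)%nat -> Ls n c -> Ls m c.
Proof. intros Hdec m n c Hmn. induction Hmn; auto. Qed.

Lemma cluster_in (d : nat) (Ls : nat -> chord -> Prop) (f : nat -> chord) (c : chord) :
  (forall n c, Ls (S n) c -> Ls n c) -> (forall n, NSIL d (Ls n)) ->
  (forall e, 0 < e -> forall N, exists n, (N <= n)%nat /\ Ls n (f n) /\ cclose e c (f n)) ->
  forall m, Ls m c.
Proof. intros Hdec HN H m. apply lim_gen. apply (HN m).
  intros e He. destruct (H e He m) as [n [Hn [Ln Cn]]]. exists (f n). split; auto.
  apply (Ls_mono Ls Hdec m n); auto. Qed.

Lemma cluster_conv (d : nat) (Ls : nat -> chord -> Prop) (f : nat -> chord) (c : chord) (J : nat -> Prop) :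
  (forall n c, Ls (S n) c -> Ls n c) -> (forall n, NSIL d (Ls n)) ->
  cconv f c J -> inf J -> (forall n, J n -> Ls n (f n)) -> forall m, Ls m c.
Proof. intros Hdec HN Hc HJ Hf. apply (cluster_in d Ls f c Hdec HN).
  intros e He N. destruct (cconv_close f c J Hc HJ e He N) as [n [Hn [Jn Cn]]]. eauto. Qed.

Lemma nsil_circle (d : nat) (L : chord -> Prop) (c : chord) : NSIL d L -> L c ->
  on_circle (fst c) /\ on_circle (snd c).
Proof. intros [[Hc _] _] Lc. auto. Qed.

Lemma inter_lam (d : nat) (Ls : nat -> chord -> Prop) :
  (forall n c, Ls (S n) c -> Ls n c) -> (forall n, NSIL d (Ls n)) ->
  lamination (fun c => forall n, Ls n c).
Proof. intros Hdec HN.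
  assert (HL : forall n, lamination (Ls n)) by (intros n; apply HN).
  split; [|split; [|split; [|split]]].
  - intros c Hc. apply (HL 0%nat), Hc.
  - intros a b H n. apply (HL n), H.
  - intros a Ha n. apply (HL n), Ha.
  - intros c1 c2 H1 H2. apply (HL 0%nat); auto.
  - intros x Hx.
    assert (Hn : forall n, exists c, Ls n c /\ seg c x).
    { intros n. destruct (HL n) as [_ [_ [_ [_ Hcl]]]]. apply Hcl. intros [eps Heps]. apply Hx.
      exists eps. intros y Hy [c [Hc Hs]]. apply (Heps y Hy). exists c. auto. }
    destruct (Hn 0%nat) as [[a b] [L0 S0]].
    destruct ((proj1 (HL 0%nat)) _ L0) as [Ha Hb]; cbn [fst snd] in *.
    destruct (classic (on_circle x)) as [Hxc|Hxc].
    { exists (x, x). split. intros n. apply (HL n), Hxc. apply seg_fst. }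
    assert (Hxd : in_open_disk x).
    { pose proof (seg_norm a b x Ha Hb S0). unfold in_open_disk, on_circle in *. lra. }
    exists (a, b). split; auto. intros n.
    destruct (Hn n) as [[u v] [Ln Sn]].
    assert (L0' : Ls 0%nat (u, v)) by (apply (Ls_mono Ls Hdec 0%nat n); auto; lia).
    destruct (HL 0%nat) as [_ [_ [_ [Hnc _]]]].
    destruct (classic (chord_eq (a, b) (u, v))) as [[[E1 E2]|[E1 E2]]|Hne]; cbn [fst snd] in *; subst.
    + auto.
    + apply (HL n), Ln.
    + exfalso. apply (Hnc _ _ L0 L0'). split; auto. exists x. auto.
Qed.

Lemma inter_bwd (d : nat) (Ls : nat -> chord -> Prop) : (2 <= d)%nat ->
  (forall n c, Ls (S n) c -> Ls n c) -> (forall n, NSIL d (Ls n)) ->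
  forall c, (forall n, Ls n c) -> exists c', (forall n, Ls n c') /\ chord_eq (sigma_chord d c') c.
Proof. intros Hd Hdec HN c Hc.
  assert (H : forall n, exists c', Ls n c' /\ chord_eq (sigma_chord d c') c).
  { intros n. destruct (HN n) as [_ [[_ [Hb _]] _]]. apply Hb, Hc. }
  pose (F := fun n => proj1_sig (constructive_indefinite_description _ (H n))).
  assert (HF : forall n, Ls n (F n) /\ chord_eq (sigma_chord d (F n)) c).
  { intros n. unfold F. destruct (constructive_indefinite_description _ (H n)); auto. }
  destruct (BWchord (fun _ => True) F) as [cs [J [_ [HJ Cc]]]].
  { intros N. exists N. auto. }
  { intros n _. destruct (nsil_circle d _ _ (HN n) (proj1 (HF n))). split; apply circle_bnd; auto. }
  assert (Hcs : forall m, Ls m cs).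
  { apply (cluster_conv d Ls F cs J Hdec HN Cc HJ). intros n _. apply HF. }
  exists cs. split; auto.
  apply chord_eq_lim. intros e He.
  assert (Hd' : 0 < INR d) by (apply lt_0_INR; lia).
  assert (He' : 0 < e / (2 * INR d)) by (apply Rdiv_lt_0_compat; lra).
  destruct (cconv_close F cs J Cc HJ _ He' 0%nat) as [n [_ [Jn Cn]]].
  exists (sigma_chord d (F n)). split; [apply HF|].
  destruct (nsil_circle d _ _ (HN 0%nat) (Hcs 0%nat)). destruct (nsil_circle d _ _ (HN n) (proj1 (HF n))).
  apply sigma_cclose; auto; lia.
Qed.

Lemma inter_ne (d : nat) (Ls : nat -> chord -> Prop) : (2 <= d)%nat ->
  (forall n c, Ls (S n) c -> Ls n c) -> (forall n, NSIL d (Ls n)) ->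
  nonempty_lam (fun c => forall n, Ls n c).
Proof. intros Hd Hdec HN.
  assert (H : forall n, exists c, Ls n c /\ / (2 * INR d ^ 2) <= Cmod (Cminus (fst c) (snd c))).
  { intros n. apply long_leaf; auto. apply HN. }
  pose (F := fun n => proj1_sig (constructive_indefinite_description _ (H n))).
  assert (HF : forall n, Ls n (F n) /\ / (2 * INR d ^ 2) <= Cmod (Cminus (fst (F n)) (snd (F n)))).
  { intros n. unfold F. destruct (constructive_indefinite_description _ (H n)); auto. }
  destruct (BWchord (fun _ => True) F) as [cs [J [_ [HJ Cc]]]].
  { intros N. exists N. auto. }
  { intros n _. destruct (nsil_circle d _ _ (HN n) (proj1 (HF n))). split; apply circle_bnd; auto. }
  exists cs. split.
  - apply (cluster_conv d Ls F cs J Hdec HN Cc HJ). intros n _. apply HF.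
  - unfold degenerate. apply (dist_lim _ _ (/ (2 * INR d ^ 2))).
    + assert (0 < INR d) by (apply lt_0_INR; lia). apply Rinv_0_lt_compat. nra.
    + intros e He. destruct (cconv_close F cs J Cc HJ _ He 0%nat) as [n [_ [Jn [C1 C2]]]].
      exists (fst (F n)), (snd (F n)). split; auto. split; auto. apply HF.
Qed.

Definition proj (b : bool) (c : chord) : point := if b then fst c else snd c.

Lemma proj_close (b : bool) (e : R) (c c' : chord) : cclose e c c' -> close e (proj b c) (proj b c').
Proof. intros [H1 H2]. destruct b; auto. Qed.

Lemma proj_circle (b : bool) (c : chord) : on_circle (fst c) -> on_circle (snd c) -> on_circle (proj b c).
Proof. destruct b; auto. Qed.

Lemma proj_disj (bi bj : bool) (c1 c2 : chord) : disjoint_chords c1 c2 -> proj bi c1 <> proj bj c2.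
Proof. intros H. destruct (disj_endpoints c1 c2 H) as [A [B [C D]]]. destruct bi, bj; auto. Qed.

Lemma proj_vals (d : nat) (b : bool) (f c : chord) : chord_eq (sigma_chord d f) (sigma_chord d c) ->
  sigma d (proj b f) = sigma d (fst c) \/ sigma d (proj b f) = sigma d (snd c).
Proof. intros H. destruct (sib_vals d f c H). destruct b; auto. Qed.

Lemma inter_sib (d : nat) (Ls : nat -> chord -> Prop) : (2 <= d)%nat ->
  (forall n c, Ls (S n) c -> Ls n c) -> (forall n, NSIL d (Ls n)) ->
  forall c, (forall n, Ls n c) -> ~ critical d c ->
  exists f : nat -> chord,
       f O = c /\
       (forall i, (i < d)%nat -> forall n, Ls n (f i)) /\
       (forall i, (i < d)%nat -> chord_eq (sigma_chord d (f i)) (sigma_chord d c)) /\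
       (forall i j, (i < d)%nat -> (j < d)%nat -> i <> j -> disjoint_chords (f i) (f j)).
Proof. intros Hd Hdec HN c Hc Hnc.
  set (P := fun n (f : nat -> chord) => f O = c /\
       (forall i, (i < d)%nat -> Ls n (f i)) /\
       (forall i, (i < d)%nat -> chord_eq (sigma_chord d (f i)) (sigma_chord d c)) /\
       (forall i j, (i < d)%nat -> (j < d)%nat -> i <> j -> disjoint_chords (f i) (f j))).
  assert (H : forall n, exists f, P n f).
  { intros n. destruct (HN n) as [_ [[_ [_ Hs]] _]]. apply Hs; auto. }
  pose (F := fun n => proj1_sig (constructive_indefinite_description _ (H n))).
  assert (HF : forall n, P n (F n)).
  { intros n. unfold F. destruct (constructive_indefinite_description _ (H n)); auto. }
  assert (Hd' : 0 < INR d) by (apply lt_0_INR; lia).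
  destruct (BWfam d (fun _ => True) (fun n i => F n i)) as [G [J [_ [HJ CG]]]].
  { intros N. exists N. auto. }
  { intros n i _ Hi. destruct (HF n) as [_ [HL _]].
    destruct (nsil_circle d _ _ (HN n) (HL i Hi)). split; apply circle_bnd; auto. }
  assert (HG : forall i, (i < d)%nat -> forall m, Ls m (G i)).
  { intros i Hi. apply (cluster_conv d Ls (fun n => F n i) (G i) J Hdec HN (CG i Hi) HJ).
    intros n _. destruct (HF n) as [_ [HL _]]. auto. }
  assert (HGc : forall i, (i < d)%nat -> on_circle (fst (G i)) /\ on_circle (snd (G i))).
  { intros i Hi. apply (nsil_circle d (Ls 0%nat)); [apply HN | apply HG; auto]. }
  exists G. split; [|split; [|split]].
  - apply cclose_all_eq. intros e He.
    destruct (cconv_close _ _ J (CG 0%nat ltac:(lia)) HJ e He 0%nat) as [n [_ [_ Cn]]].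
    destruct (HF n) as [E0 _]. cbn beta in Cn. rewrite E0 in Cn. exact Cn.
  - exact HG.
  - intros i Hi. apply chord_eq_lim. intros e He.
    assert (He' : 0 < e / (2 * INR d)) by (apply Rdiv_lt_0_compat; lra).
    destruct (cconv_close _ _ J (CG i Hi) HJ _ He' 0%nat) as [n [_ [Jn Cn]]].
    destruct (HF n) as [_ [HL [HS _]]].
    exists (sigma_chord d (F n i)). split; [apply HS; auto|].
    destruct (HGc i Hi). destruct (nsil_circle d _ _ (HN n) (HL i Hi)).
    apply sigma_cclose; auto; lia.
  - intros i j Hi Hj Hij.
    set (a := fst c). set (b := snd c).
    assert (Hk : exists k, 0 < k /\ k <= / (2 * INR d ^ 2) /\
        (sigma d a <> sigma d b -> k <= Cmod (Cminus (sigma d a) (sigma d b)) / INR d)).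
    { destruct (classic (sigma d a = sigma d b)) as [E|E].
      - exists (/ (2 * INR d ^ 2)). split; [apply Rinv_0_lt_compat; nra|]. split; [lra|]. intros; contradiction.
      - exists (Rmin (/ (2 * INR d ^ 2)) (Cmod (Cminus (sigma d a) (sigma d b)) / INR d)).
        split; [|split; [apply Rmin_l|intros; apply Rmin_r]].
        apply Rmin_pos; [apply Rinv_0_lt_compat; nra|]. apply Rdiv_lt_0_compat; auto.
        destruct (Cmod_ge_0 (Cminus (sigma d a) (sigma d b))); auto. exfalso. apply E. apply Cminus_eq0. auto. }
    destruct Hk as [k [Hk1 [Hk2 Hk3]]].
    assert (Hsep : forall bi bj : bool, proj bi (G i) <> proj bj (G j)).
    { intros bi bj.
      apply (dist_lim _ _ k Hk1). intros e He.
      destruct (cconv_ev _ _ J (CG i Hi) e He) as [N1 K1].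
      destruct (cconv_ev _ _ J (CG j Hj) e He) as [N2 K2].
      destruct (HJ (N1 + N2)%nat) as [n [Hn Jn]].
      specialize (K1 n Jn ltac:(lia)). specialize (K2 n Jn ltac:(lia)).
      destruct (HF n) as [_ [HL [HS HD]]].
      exists (proj bi (F n i)), (proj bj (F n j)). split; [|split].
      - apply proj_close; auto.
      - apply proj_close; auto.
      - destruct (nsil_circle d _ _ (HN n) (HL i Hi)). destruct (nsil_circle d _ _ (HN n) (HL j Hj)).
        apply (sep d k a b); auto.
        + apply proj_circle; auto.
        + apply proj_circle; auto.
        + apply proj_disj. apply HD; auto.
        + apply proj_vals. apply HS; auto.
        + apply proj_vals. apply HS; auto. }
    apply (disj_from_distinct (Ls 0%nat)); try apply HG; auto; try apply (HN 0%nat).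
    + apply (Hsep true true).
    + apply (Hsep true false).
    + apply (Hsep false true).
    + apply (Hsep false false).
Qed.


Lemma inter_nsil (d : nat) (Ls : nat -> chord -> Prop) : (2 <= d)%nat ->
  (forall n c, Ls (S n) c -> Ls n c) -> (forall n, NSIL d (Ls n)) ->
  NSIL d (fun c => forall n, Ls n c).
Proof. intros Hd Hdec HN. split; [|split].
  - apply inter_lam with d; auto.
  - split; [|split].
    + intros c Hc n. destruct (HN n) as [_ [[Hf _] _]]. apply Hf, Hc.
    + apply (inter_bwd d); auto.
    + intros c Hc Hnc. destruct (inter_sib d Ls Hd Hdec HN c Hc Hnc) as [f [H1 [H2 [H3 H4]]]].
      exists f. repeat split; auto.
  - apply (inter_ne d); auto.
Qed.

Lemma int_approx (y : R) : exists a b : nat, Rabs (y - (INR a - INR b)) < 1.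
Proof. destruct (base_Int_part y) as [H1 H2]. set (z := Int_part y) in *.
  destruct (Z_le_gt_dec 0 z) as [Hz|Hz].
  - exists (Z.to_nat z), 0%nat. rewrite (INR_IZR_INZ (Z.to_nat z)), Z2Nat.id by lia. simpl. apply Rabs_def1; lra.
  - exists 0%nat, (Z.to_nat (- z)). rewrite (INR_IZR_INZ (Z.to_nat (- z))), Z2Nat.id by lia. rewrite opp_IZR. simpl. apply Rabs_def1; lra.
Qed.

Definition dec5 (k : nat) : nat * nat * nat * nat * nat :=
  let (x, m) := Cantor.of_nat k in let (y, z) := Cantor.of_nat x in
  let (a, b) := Cantor.of_nat y in let (c, e) := Cantor.of_nat z in (a, b, c, e, m).

Definition Bset (k : nat) (p : point) : Prop :=
  let '(a, b, c, e, m) := dec5 k in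
  Rabs (fst p - (INR a - INR b) / INR (S m)) < / INR (S m) /\
  Rabs (snd p - (INR c - INR e) / INR (S m)) < / INR (S m).

Lemma basis (M : point) (eps : R) : 0 < eps -> exists k, Bset k M /\
  forall p, Bset k p -> Rabs (fst p - fst M) < eps /\ Rabs (snd p - snd M) < eps.
Proof. intros He. destruct (archimed_cor1 (eps / 2) ltac:(lra)) as [N [HN HN0]].
  destruct N as [|m]; [lia|].
  set (w := INR (S m)). assert (Hw : 0 < w) by (apply lt_0_INR; lia).
  destruct (int_approx (fst M * w)) as [a [b Hab]].
  destruct (int_approx (snd M * w)) as [c [e Hce]].
  exists (Cantor.to_nat (Cantor.to_nat (Cantor.to_nat (a, b), Cantor.to_nat (c, e)), m)).
  unfold Bset, dec5. rewrite !Cantor.cancel_of_to. fold w.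
  assert (K : forall (x : R) (i j : nat), Rabs (x * w - (INR i - INR j)) < 1 -> Rabs (x - (INR i - INR j) / w) < / w).
  { intros x i j Hx. replace (x - (INR i - INR j) / w) with ((x * w - (INR i - INR j)) * / w) by (field; lra).
    rewrite Rabs_mult, (Rabs_right (/ w)) by (apply Rle_ge, Rlt_le, Rinv_0_lt_compat; lra).
    pose proof (Rinv_0_lt_compat w Hw). nra. }
  split; [split; apply K; auto|].
  intros p Hp. destruct Hp as [P1 P2]. pose proof (K _ _ _ Hab) as K1. pose proof (K _ _ _ Hce) as K2.
  apply Rabs_def2 in P1, P2, K1, K2. destruct P1, P2, K1, K2.
  assert (HN1 : / w < eps / 2) by exact HN. split; apply Rabs_def1; lra.
Qed.

Definition avoid (L' : chord -> Prop) (k : nat) : Prop :=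
  forall p, Bset k p -> ~ (exists c, L' c /\ seg c p).

Definition goodsub (d : nat) (Lcur L' : chord -> Prop) (k : nat) : Prop :=
  NSIL d L' /\ (forall c, L' c -> Lcur c) /\ avoid L' k.

Definition step (d : nat) (Lcur : chord -> Prop) (k : nat) : chord -> Prop :=
  epsilon (inhabits Lcur) (fun L' => goodsub d Lcur L' k \/ (~ (exists L'', goodsub d Lcur L'' k) /\ L' = Lcur)).

Lemma step_spec (d : nat) (Lcur : chord -> Prop) (k : nat) :
  goodsub d Lcur (step d Lcur k) k \/ (~ (exists L'', goodsub d Lcur L'' k) /\ step d Lcur k = Lcur).
Proof. unfold step. apply epsilon_spec.
  destruct (classic (exists L'', goodsub d Lcur L'' k)) as [[L'' H]|H].
  - exists L''. auto.
  - exists Lcur. auto. Qed.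

Fixpoint seqL (d : nat) (L : chord -> Prop) (k : nat) : chord -> Prop :=
  match k with O => L | S k => step d (seqL d L k) k end.

Lemma seqL_props (d : nat) (L : chord -> Prop) : NSIL d L ->
  forall k, NSIL d (seqL d L k) /\ (forall c, seqL d L (S k) c -> seqL d L k c).
Proof. intros HL k. induction k.
  - simpl. destruct (step_spec d L 0) as [[H1 [H2 _]]|[_ E]]; [split; auto|].
    rewrite E. auto.
  - destruct IHk as [IH1 IH2].
    assert (NS : NSIL d (seqL d L (S k))).
    { simpl. destruct (step_spec d (seqL d L k) k) as [[H1 _]|[_ E]]; auto. rewrite E. auto. }
    split; auto.
    change (seqL d L (S (S k))) with (step d (seqL d L (S k)) (S k)).
    destruct (step_spec d (seqL d L (S k)) (S k)) as [[_ [H2 _]]|[_ E]]; auto.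
    rewrite E. auto.
Qed.

Lemma step_avoid (d : nat) (L : chord -> Prop) (k : nat) :
  (exists L'', goodsub d (seqL d L k) L'' k) -> avoid (seqL d L (S k)) k.
Proof. intros H. simpl. destruct (step_spec d (seqL d L k) k) as [[_ [_ A]]|[N _]]; auto. contradiction. Qed.

Theorem lemmal (d : nat) (L : chord -> Prop) :
  (2 <= d)%nat ->
  nonempty_sibling_invariant_lamination d L ->
  exists L' : chord -> Prop, chief d L L'.
Proof. intros Hd HL.
  pose proof (seqL_props d L HL) as SP.
  set (Li := fun c => forall k, seqL d L k c).
  assert (HLi : NSIL d Li).
  { apply inter_nsil; auto; intros; apply SP; auto. }
  exists Li. split; [|split].
  - intros c Hc. apply (Hc 0%nat).
  - exact HLi.
  - intros L'' Hsub HL'' c Hc. apply NNPP. intros Hn.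
    pose proof HL'' as HL0. destruct HL'' as [[Hc'' [Hsym'' [Hdeg'' [_ Hcl'']]]] _].
    pose proof (proj1 HLi) as [HcI _].
    destruct c as [a b]. destruct (HcI _ Hc) as [Ha Hb]; cbn [fst snd] in *.
    destruct (classic (a = b)) as [<-|Hab]; [apply Hn, Hdeg''; auto|].
    set (M := mid a b).
    assert (HM : ~ (exists e, L'' e /\ seg e M)).
    { intros [[u v] [Le Se]].
      pose proof (proj1 (SP 0%nat)) as [[_ [Hsym0 [_ [Hnc0 _]]]] _].
      assert (L0e : seqL d L 0 (u, v)) by (apply (Hsub _ Le 0%nat)).
      destruct (classic (chord_eq (u, v) (a, b))) as [[[E1 E2]|[E1 E2]]|Hne]; cbn [fst snd] in *; subst.
      - auto.
      - apply Hn, Hsym'', Le.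
      - apply (Hnc0 _ _ L0e (Hc 0%nat)). split; auto. exists M. split; [|split; auto].
        + apply mid_disk; auto.
        + apply mid_seg. }
    assert (Hloc : locally M (fun p => ~ exists e, L'' e /\ seg e p)).
    { apply NNPP. intros Hnl. apply HM. apply Hcl''. exact Hnl. }
    destruct Hloc as [eps Heps].
    destruct (basis M eps (cond_pos eps)) as [k [Bk Hk]].
    assert (Av : avoid (seqL d L (S k)) k).
    { apply step_avoid. exists L''. split; [|split].
      - exact HL0.
      - intros c Hc'. apply (Hsub _ Hc' k).
      - intros p Bp. apply Heps. apply ball_pt. destruct (Hk p Bp). auto. }
    apply (Av M Bk). exists (a, b). split; [apply Hc|apply mid_seg].
Qed.
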